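(* Let $X$ be a Hausdorff zero-dimensional topological space. Then $\mathrm{Homeo}(X)$ is fully transitive.
   Context: A space is zero-dimensional if its topology has a basis of clopen sets. Two points $x,y\in X$ are similar if there are neighbourhoods $U_x\ni x$, $U_y\ni y$ and a homeomorphism $h\colon U_x\to U_y$ with $h(x)=y$. A group $G$ of homeomorphisms of $X$ is fully transitive if for every natural number $k$ and all $k$-tuples of pairwise distinct points $(x_1,\dots,x_k)$, $(y_1,\dots,y_k)$ with $x_i$ similar to $y_i$ for each $i$, there is $g\in G$ with $g(x_i)=y_i$ for all $i$. *)

(* Defs.v *)
From HB Require Import structures.
From mathcomp Require Import all_boot all_algebra.
From mathcomp Require Import all_classical all_reals all_analysis.
Set Implicit Arguments. Unset Strict Implicit. Unset Printing Implicit Defensive.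
Local Open Scope classical_set_scope.

(* Zero-dimensional in the paper's sense: the clopen sets form a basis.
   (Not the library's [zero_dimensional], which is a separation property.) *)
Definition clopen_basis (X : topologicalType) : Prop :=
  forall (U : set X) (x : X), open U -> U x ->
    exists V : set X, [/\ clopen V, V x & V `<=` U].

(* h : U -> V is a homeomorphism between the subspaces U and V of X,
   represented by a function on X (only its values on U matter). *)
Definition subspace_homeo (X : topologicalType) (U V : set X) (h : X -> X) : Prop :=
  exists g : X -> X,
    [/\ {within U, continuous h}, {within V, continuous g},
        (forall x, U x -> V (h x)) /\ (forall y, V y -> U (g y)) &
        (forall x, U x -> g (h x) = x) /\ (forall y, V y -> h (g y) = y)].

Definition similar (X : topologicalType) (x y : X) : Prop :=
  exists (U V : set X) (h : X -> X),
    [/\ nbhs x U, nbhs y V, subspace_homeo U V h & h x = y].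

Definition homeomorphism (X : topologicalType) (f : X -> X) : Prop :=
  exists g : X -> X, [/\ continuous f, continuous g, cancel f g & cancel g f].

Definition Homeo_fully_transitive (X : topologicalType) : Prop :=
  forall (k : nat) (x y : 'I_k -> X),
    injective x -> injective y -> (forall i, similar (x i) (y i)) ->
    exists f : X -> X, homeomorphism f /\ (forall i, f (x i) = y i).

(* Main.v *)
Require Import Defs.
From mathcomp Require Import all_boot all_algebra.
From mathcomp Require Import all_classical all_reals all_analysis.
Set Implicit Arguments. Unset Strict Implicit. Unset Printing Implicit Defensive.
Local Open Scope classical_set_scope.

Section S.
Variable X : topologicalType.

Lemma open_nb (A : set X) x : open A -> A x -> nbhs x A.
Proof. by move=> oA Ax; apply: open_nbhs_nbhs; split. Qed.

Lemma nb_open (A : set X) : (forall x, A x -> nbhs x A) -> open A.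
Proof. by move=> H; rewrite openE => x /H. Qed.

Definition cw (U : set X) (h : X -> X) :=
  forall x, U x -> forall B, nbhs (h x) B -> nbhs x [set u | U u -> B (h u)].

Lemma within_cw (U : set X) (h : X -> X) : {within U, continuous h} -> cw U h.
Proof.
move=> /subspace_continuousP H x Ux B Bn.
have := H x Ux B Bn. rewrite /within /=. done.
Qed.
Definition LH (a b : X) := exists (U V : set X) (h g : X -> X),
  [/\ nbhs a U, nbhs b V, (forall x, U x -> V (h x)) /\ (forall y, V y -> U (g y)),
      (forall x, U x -> g (h x) = x) /\ (forall y, V y -> h (g y) = y) &
      (cw U h /\ cw V g) /\ h a = b].

Lemma sim_LH a b : Defs.similar a b -> LH a b.
Proof.
move=> [U [V [h [Ua Vb [g [ch cg [m1 m2] [i1 i2]]] hab]]]].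
exists U, V, h, g; split => //; split => //; split; exact: within_cw.
Qed.

Lemma LH_comp f a b : homeomorphism f -> LH a b -> LH (f a) b.
Proof.
move=> [f' [cf cf' fK f'K]] [U [V [h [g [Ua Vb [m1 m2] [i1 i2] [[ch cg] hab]]]]]].
exists (f' @^-1` U), V, (h \o f'), (f \o g); split => //.
- have := cf' (f a) U; rewrite fK; apply; exact: Ua.
- split => [x /= Ux|y Vy /=]; first exact: m1.
  rewrite fK; exact: m2.
- split => [x /= Ux|y Vy /=]; first by rewrite i1 // f'K.
  by rewrite fK i2.
- split; last by rewrite /= fK.
  split => [x /= Ux B Bn|y Vy B Bn].
    exact: (cf' x _ (ch _ Ux B Bn)).
  have := cg y Vy _ (cf (g y) B Bn). done.
Qed.
Lemma clopen_pre (U A B : set X) h : clopen A -> clopen B -> A `<=` U -> cw U h ->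
  clopen (A `&` h @^-1` B).
Proof.
move=> [oA cA] [oB cB] AU ch; split.
  apply: nb_open => x [Ax Bhx].
  apply: filterS (filterI (ch x (AU _ Ax) B (open_nb oB Bhx)) (open_nb oA Ax)).
  by move=> u [Hu Au]; split => //; apply: Hu; apply: AU.
rewrite -openC; apply: nb_open => x nW.
case: (pselect (A x)) => Ax.
  have nB : ~ B (h x) by move=> Bh; apply: nW.
  apply: filterS (filterI (ch x (AU _ Ax) _ (open_nb (closed_openC cB) nB)) (open_nb oA Ax)).
  by move=> u [Hu Au] [_ Bu]; apply: Hu => //; apply: AU.
apply: filterS (open_nb (closed_openC cA) Ax).
by move=> u nAu [].
Qed.

Lemma swap (hX : hausdorff_space X) (cb : clopen_basis X) (Q : set X) a b :
  closed Q -> ~ Q a -> ~ Q b -> a <> b -> LH a b ->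
  exists F, homeomorphism F /\ F a = b /\ (forall z, Q z -> F z = z).
Proof.
move=> cQ Qa Qb ab [U [V [h [g [Ua Vb [m1 m2] [i1 i2] [[ch cg] hab]]]]]].
have c1 : forall c : X, closed [set c].
  exact: accessible_closed_set1 (hausdorff_accessible hX).
have [A [[oA cA] Aa AO]] := cb (U° `&` ~` Q `&` ~` [set b]) a
  (openI (openI (@open_interior _ U) (closed_openC cQ)) (closed_openC (c1 b)))
  (conj (conj Ua Qa) ab).
have Ab : ~ A b by move=> /AO [_ ]; apply.
have [B [[oB cB] Bb BO]] := cb (V° `&` ~` Q `&` ~` A) b
  (openI (openI (@open_interior _ V) (closed_openC cQ)) (closed_openC cA))
  (conj (conj Vb Qb) Ab).
have AU : A `<=` U by move=> z /AO [[/interior_subset]].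
have BV : B `<=` V by move=> z /BO [[/interior_subset]].
have AQ : forall z, A z -> ~ Q z by move=> z /AO [[]].
have BQ : forall z, B z -> ~ Q z by move=> z /BO [[]].
have BA : forall z, B z -> ~ A z by move=> z /BO [].
pose W := A `&` h @^-1` B.
pose W' := B `&` g @^-1` A.
have [oW cW] : clopen W by apply: (@clopen_pre U).
have [oW' cW'] : clopen W' by apply: (@clopen_pre V).
have hW x : W x -> W' (h x) /\ ~ W (h x).
  move=> [Ax Bhx]; split; first by split => //=; rewrite i1 //; apply: AU.
  by move=> [Ahx _]; apply: (BA _ Bhx).
have gW x : W' x -> W (g x).
  by move=> [Bx Agx]; split => //=; rewrite i2 //; apply: BV.
have disj x : W x -> ~ W' x by move=> [Ax _] [Bx _]; apply: (BA _ Bx).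
pose F x := if pselect (W x) then h x else if pselect (W' x) then g x else x.
have FW x : W x -> F x = h x by rewrite /F; case: pselect.
have FW' x : W' x -> F x = g x.
  move=> Wx; rewrite /F; destruct (pselect (W x)) as [H|H]; first by case: (disj _ H). by destruct (pselect (W' x)).
have Fo x : ~ W x -> ~ W' x -> F x = x.
  by move=> n1 n2; rewrite /F; destruct (pselect (W x)); destruct (pselect (W' x)).
have FF : cancel F F.
  move=> x; case: (pselect (W x)) => Wx.
    have [W'h _] := hW x Wx.
    by rewrite (FW x) // (FW' (h x)) // i1 //; apply: AU; case: Wx.
  case: (pselect (W' x)) => W'x.
    by rewrite (FW' x) // (FW (g x)) ?i2 //; [apply: BV; case: W'x | apply: gW].
  by rewrite !Fo.
have cF : continuous F.
  move=> x B0; case: (pselect (W x)) => Wx.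
    rewrite FW // => nB0.
    apply: filterS (filterI (ch x (AU _ (proj1 Wx)) B0 nB0) (open_nb oW Wx)).
    by move=> u [Hu Wu] /=; rewrite FW //; apply: Hu; apply: AU; case: Wu.
  case: (pselect (W' x)) => W'x.
    rewrite FW' // => nB0.
    apply: filterS (filterI (cg x (BV _ (proj1 W'x)) B0 nB0) (open_nb oW' W'x)).
    by move=> u [Hu Wu] /=; rewrite FW' //; apply: Hu; apply: BV; case: Wu.
  rewrite Fo // => nB0.
  have nU : nbhs x (~` (W `|` W')).
    apply: open_nb; first by apply: closed_openC; apply: closedU.
    by move=> [].
  apply: filterS (filterI nB0 nU) => u [Bu nu] /=.
  by rewrite Fo // => ?; apply: nu; [left|right].
exists F; split; first by exists F; split.
split; first by rewrite (FW a) ?hab //; split => //=; rewrite hab.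
move=> z Qz; rewrite Fo //.
  by move=> [Az _]; apply: (AQ _ Az).
by move=> [Bz _]; apply: (BQ _ Bz).
Qed.
Lemma closedQ (hX : hausdorff_space X) n (y : nat -> X) :
  closed [set p | exists2 i, (i < n)%N & p = y i].
Proof.
elim: n => [|n IH].
  have -> : [set p | exists2 i, (i < 0)%N & p = y i] = set0 by apply/seteqP; split => p // [].
  exact: closed0.
have -> : [set p | exists2 i, (i < n.+1)%N & p = y i] =
   [set p | exists2 i, (i < n)%N & p = y i] `|` [set y n].
  apply/seteqP; split => p /=.
    move=> [i]; rewrite ltnS leq_eqVlt => /orP [/eqP -> ->|lt ->]; [by right|left; by exists i].
  move=> [[i lt ->]|->]; [exists i => //; exact: ltnW | by exists n].
apply: closedU => //; exact: (accessible_closed_set1 (hausdorff_accessible hX)).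
Qed.

Lemma main (hX : hausdorff_space X) (cb : clopen_basis X) n : forall x y : nat -> X,
  (forall i j, (i < n)%N -> (j < n)%N -> x i = x j -> i = j) ->
  (forall i j, (i < n)%N -> (j < n)%N -> y i = y j -> i = j) ->
  (forall i, (i < n)%N -> LH (x i) (y i)) ->
  exists f, homeomorphism f /\ forall i, (i < n)%N -> f (x i) = y i.
Proof.
elim: n => [|n IH] x y ix iy hL.
  exists id; split => //; exists id; split => //; move=> t; exact: cvg_id.
have [f [[f' [cf cf' fK f'K]] Hf]] : exists f, homeomorphism f /\ forall i, (i < n)%N -> f (x i) = y i.
  apply: IH.
  - by move=> i j li lj; apply: ix; apply: ltnW.
  - by move=> i j li lj; apply: iy; apply: ltnW.
  - by move=> i li; apply: hL; apply: ltnW.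
have hf : homeomorphism f by exists f'.
have LHz := LH_comp hf (hL n (ltnSn n)).
case: (pselect (f (x n) = y n)) => zy.
  exists f; split => // i; rewrite ltnS leq_eqVlt => /orP [/eqP -> //|]; exact: Hf.
have Qz : ~ [set p | exists2 i, (i < n)%N & p = y i] (f (x n)).
  move=> [i lt E]; rewrite -Hf // in E.
  have E' : x n = x i by rewrite -[x n]fK E fK.
  have := ix _ _ (ltnSn n) (ltnW lt) E'; move=> eq; rewrite eq ltnn in lt; done.
have Qy : ~ [set p | exists2 i, (i < n)%N & p = y i] (y n).
  move=> [i lt E].
  have := iy _ _ (ltnSn n) (ltnW lt) E; move=> eq; rewrite eq ltnn in lt; done.
have [F [[F' [cF cF' FK F'K]] [Fz FQ]]] := swap hX cb (@closedQ hX n y) Qz Qy zy LHz.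
exists (F \o f); split.
  exists (f' \o F'); split.
  - by move=> t; apply: continuous_comp; [exact: cf | exact: cF].
  - by move=> t; apply: continuous_comp; [exact: cF' | exact: cf'].
  - by move=> t /=; rewrite FK fK.
  - by move=> t /=; rewrite f'K F'K.
move=> i; rewrite ltnS leq_eqVlt => /orP [/eqP -> //|lt] /=.
rewrite Hf //; apply: FQ; by exists i.
Qed.
End S.

Theorem theorem20 (X : topologicalType) :
  hausdorff_space X -> clopen_basis X -> Homeo_fully_transitive X.
Proof.
move=> hX cb [|k] x y ix iy sxy.
  exists id; split; last by case.
  by exists id; split => //; move=> t; exact: cvg_id.
have ix' : forall i j, (i < k.+1)%N -> (j < k.+1)%N -> x (inord i) = x (inord j) -> i = j.
  by move=> i j li lj E; have := congr1 (@nat_of_ord _) (ix _ _ E); rewrite !inordK.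
have iy' : forall i j, (i < k.+1)%N -> (j < k.+1)%N -> y (inord i) = y (inord j) -> i = j.
  by move=> i j li lj E; have := congr1 (@nat_of_ord _) (iy _ _ E); rewrite !inordK.
have sl : forall i, (i < k.+1)%N -> LH (x (inord i)) (y (inord i)).
  by move=> i li; apply: sim_LH.
have [f [hf Hf]] := @main X hX cb k.+1 (fun i => x (inord i)) (fun i => y (inord i)) ix' iy' sl.
exists f; split => // i; have := Hf i (ltn_ord i); rewrite inord_val; done.
Qed.
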